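(* Let $G$ be a finite simple graph on the vertex set $V(G)=\{x_{11},\ldots,x_{n1}\}$. Let $m_1,\ldots,m_n\geq 2$ be integers and let $G_1,\ldots,G_n$ be connected finite simple graphs on the vertex sets $V(G_i)=\{x_{i1},\ldots,x_{im_i}\}$, where the sets $V(G_i)\setminus\{x_{i1}\}$ are pairwise disjoint and disjoint from $V(G)$. Let $G(G_1,\ldots,G_n)$ denote the graph obtained by attaching $G_i$ to $G$ at the vertex $x_{i1}$ for every $i$. Then: (i) If $G_1,\ldots,G_n$ are vertex decomposable and, for each $i$, $x_{i1}$ is a shedding vertex of $G_i$, then $G(G_1,\ldots,G_n)$ is vertex decomposable. (ii) Conversely, if $G(G_1,\ldots,G_n)$ is vertex decomposable, then $G_1,\ldots,G_n$ are vertex decomposable.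
   Context: The graph $G(G_1,\ldots,G_n)$ has vertex set $\bigcup_{i=1}^n V(G_i)$ and edge set $E(G)\cup\bigcup_{i=1}^n E(G_i)$, i.e. the vertex $x_{i1}$ of $G$ is identified with the vertex $x_{i1}$ of $G_i$. For a graph $H$ and $W\subseteq V(H)$, $H\setminus W$ is the induced subgraph on $V(H)\setminus W$; $N_H(x)$ is the set of neighbors of $x$ and $N_H[x]=N_H(x)\cup\{x\}$. A graph $H$ is vertex decomposable if it has no edges, or else it has a vertex $x$ (called a shedding vertex) such that (1) both $H\setminus N_H[x]$ and $H\setminus\{x\}$ are vertex decomposable, and (2) for every independent set $S$ of $H\setminus N_H[x]$ there is $y\in N_H(x)$ such that $S\cup\{y\}$ is independent in $H\setminus\{x\}$. (Equivalently, the independence complex of $H$ is vertex decomposable in the sense of Björner–Wachs.) Note that by this definition a shedding vertex must satisfy both conditions (1) and (2). *)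

(* Defs.v *)
From mathcomp Require Import all_boot.
Set Implicit Arguments. Unset Strict Implicit. Unset Printing Implicit Defensive.

(* A finite simple graph H is represented by a vertex set W : {set T} together
   with an edge relation e : rel T, of which only the restriction to W matters
   (H is the induced subgraph of e on W). *)
Section Graphs.
Variable T : finType.

Definition simple_on (e : rel T) (W : {set T}) : Prop :=
  (forall u v, u \in W -> v \in W -> e u v = e v u) /\
  (forall u, u \in W -> ~~ e u u).

Definition induced (e : rel T) (W : {set T}) : rel T :=
  [rel u v | [&& u \in W, v \in W & e u v]].

Definition connected_on (e : rel T) (W : {set T}) : Prop :=
  W != set0 /\ {in W &, forall u v, connect (induced e W) u v}.

Definition nbhd (e : rel T) (W : {set T}) (x : T) : {set T} :=
  [set y in W | (y != x) && e x y].
Definition cnbhd (e : rel T) (W : {set T}) (x : T) : {set T} :=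
  x |: nbhd e W x.

Definition indep (e : rel T) (S : {set T}) : Prop :=
  forall u v, u \in S -> v \in S -> ~~ e u v.

Definition shedding_cond (e : rel T) (W : {set T}) (x : T) : Prop :=
  forall S : {set T}, S \subset W :\: cnbhd e W x -> indep e S ->
    exists2 y, y \in nbhd e W x & (y |: S \subset W :\ x) /\ indep e (y |: S).

(* vertex decomposable graphs (independence complex version) *)
Inductive vdecomp (e : rel T) : {set T} -> Prop :=
| VD_edgeless (W : {set T}) : indep e W -> vdecomp e W
| VD_shed (W : {set T}) (x : T) : x \in W ->
    vdecomp e (W :\: cnbhd e W x) -> vdecomp e (W :\ x) ->
    shedding_cond e W x -> vdecomp e W.

Definition shedding_vertex (e : rel T) (W : {set T}) (x : T) : Prop :=
  [/\ x \in W, vdecomp e (W :\: cnbhd e W x), vdecomp e (W :\ x)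
    & shedding_cond e W x].

(* The graph G(G_1,...,G_n): G = (V, eG), G_i = (Vi i, ei i). *)
Definition attach_edge (n : nat) (eG : rel T) (V : {set T})
    (Vi : 'I_n -> {set T}) (ei : 'I_n -> rel T) : rel T :=
  [rel u v | [&& u \in V, v \in V & eG u v] ||
             [exists i, [&& u \in Vi i, v \in Vi i & ei i u v]]].
Definition attach_vertices (n : nat) (V : {set T}) (Vi : 'I_n -> {set T})
  : {set T} := V :|: \bigcup_(i < n) Vi i.

End Graphs.

(* Main.v *)
Require Import Defs.
From mathcomp Require Import all_boot.
Set Implicit Arguments. Unset Strict Implicit. Unset Printing Implicit Defensive.

Section Generic.
Variable T : finType.
Implicit Types (e : rel T) (A B W S : {set T}).

Definition agree e e' W := forall u v, u \in W -> v \in W -> e u v = e' u v.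
Definition sep e A B := forall u v, u \in A -> v \in B -> ~~ e u v && ~~ e v u.
Definition disj A B := forall u, u \in A -> u \in B -> False.

Lemma mem_del e W x u :
  (u \in W :\: cnbhd e W x) = [&& u != x, ~~ e x u & u \in W].
Proof.
rewrite !inE; case: (u \in W); case: (u =P x) => //= _; by case: (e x u).
Qed.

Lemma mem_nbhd e W x u : (u \in nbhd e W x) = [&& u \in W, u != x & e x u].
Proof. by rewrite !inE. Qed.

Lemma indepS e S S' : S' \subset S -> indep e S -> indep e S'.
Proof. move=> /subsetP sS hS u v hu hv; exact: hS (sS _ hu) (sS _ hv). Qed.

Lemma indep_agree e e' W S : agree e e' W -> S \subset W -> indep e S -> indep e' S.
Proof.
move=> ag /subsetP sS hS u v hu hv; rewrite -ag; [exact: hS | exact: sS | exact: sS].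
Qed.

Lemma agreeS e e' W W' : W' \subset W -> agree e e' W -> agree e e' W'.
Proof. by move=> /subsetP s ag u v hu hv; apply: ag; apply: s. Qed.

Lemma vd_ext e W : vdecomp e W -> forall e', agree e e' W -> vdecomp e' W.
Proof.
elim=> {W} [W hW | W x xW _ IH1 _ IH2 hs] e' ag.
  by apply: VD_edgeless; apply: (indep_agree ag (subxx _)).
have Hc : cnbhd e W x = cnbhd e' W x.
  apply/setP=> u; rewrite !inE; case uW: (u \in W) => /=; last done.
  by rewrite (ag x u xW uW).
have Hn : nbhd e W x = nbhd e' W x.
  apply/setP=> u; rewrite !inE; case uW: (u \in W) => //=; by rewrite (ag x u xW uW).
apply: (VD_shed xW).
- by rewrite -Hc; apply: IH1; apply: agreeS ag; apply: subsetDl.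
- by apply: IH2; apply: agreeS ag; apply: subsetDl.
move=> S sS iS.
have sS' : S \subset W :\: cnbhd e W x by rewrite Hc.
have iS2 : indep e S.
  have sSW : S \subset W by apply: subset_trans sS' (subsetDl _ _).
  by apply: (indep_agree (e:=e') _ sSW iS) => u v hu hv; rewrite ag.
have [y yN [s1 i1]] := hs S sS' iS2.
exists y; first by rewrite -Hn.
split=> //; apply: indep_agree ag _ i1.
by apply: subset_trans s1 (subsetDl _ _).
Qed.


Lemma eq_delU e A B x : x \in A -> disj A B -> sep e A B ->
  (A :|: B) :\: cnbhd e (A :|: B) x = (A :\: cnbhd e A x) :|: B.
Proof.
move=> xA dAB sAB; apply/setP=> u; rewrite in_setU !mem_del in_setU.
case uB: (u \in B); last by rewrite !orbF.
rewrite orbT /=; have /andP[-> _] := sAB _ _ xA uB.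
have ux : u != x by apply/eqP => ux; move: uB; rewrite ux => /(dAB x xA).
by rewrite ux orbT.
Qed.

Lemma eq_D1U A B x : x \in A -> disj A B -> (A :|: B) :\ x = (A :\ x) :|: B.
Proof.
move=> xA dAB; apply/setP=> u; rewrite !inE.
case uB: (u \in B); last by rewrite !orbF.
have ux : u != x by apply/eqP => ux; move: uB; rewrite ux => /(dAB x xA).
by rewrite ux.
Qed.

Lemma disjS A B A' B' : A' \subset A -> B' \subset B -> disj A B -> disj A' B'.
Proof. by move=> /subsetP s1 /subsetP s2 d u h1 h2; apply: (d u (s1 _ h1) (s2 _ h2)). Qed.

Lemma sepS e A B A' B' : A' \subset A -> B' \subset B -> sep e A B -> sep e A' B'.
Proof. by move=> /subsetP s1 /subsetP s2 d u v h1 h2; apply: (d u v (s1 _ h1) (s2 _ h2)). Qed.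

Lemma disjC A B : disj A B -> disj B A.
Proof. by move=> d u h1 h2; apply: (d u h2 h1). Qed.

Lemma sepC e A B : sep e A B -> sep e B A.
Proof. by move=> d u v h1 h2; rewrite andbC; apply: d. Qed.

Lemma shed_union e A B x : x \in A -> disj A B -> sep e A B ->
  vdecomp e ((A :\: cnbhd e A x) :|: B) -> vdecomp e ((A :\ x) :|: B) ->
  shedding_cond e A x -> vdecomp e (A :|: B).
Proof.
move=> xA dAB sAB h1 h2 hs.
apply: (VD_shed (x := x)); first by rewrite inE xA.
- by rewrite eq_delU.
- by rewrite eq_D1U.
move=> S sS iS.
have sSA : S :&: A \subset A :\: cnbhd e A x.
  apply/subsetP=> u; rewrite inE => /andP[uS uA].
  have := subsetP sS u uS; rewrite !mem_del => /and3P[-> -> _]; by rewrite uA.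
have [y yN [s1 i1]] := hs _ sSA (indepS (subsetIl _ _) iS).
have yA : y \in A by move: yN; rewrite mem_nbhd => /and3P[].
exists y.
  move: yN; rewrite !mem_nbhd inE => /and3P[-> -> ->]; done.
split.
  apply/subsetP=> u; rewrite !inE => /orP[/eqP->|uS].
    have := subsetP s1 y; rewrite !inE eqxx /= => /(_ isT) /andP[-> ->]; done.
  have := subsetP sS u uS; rewrite mem_del !inE => /and3P[-> _ ->]; done.
have key : forall u v, u = y -> v \in S -> ~~ e u v && ~~ e v u.
  move=> u v -> vS; case vA: (v \in A).
    have hv : v \in y |: (S :&: A) by rewrite !inE vS vA orbT.
    have hy : y \in y |: (S :&: A) by rewrite !inE eqxx.
    by rewrite (i1 _ _ hy hv) (i1 _ _ hv hy).
  have vB : v \in B.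
    by have := subsetP sS v vS; rewrite mem_del inE vA => /and3P[].
  exact: sAB.
move=> u v; rewrite !inE => /orP[/eqP uy|uS] /orP[/eqP vy|vS].
- have hy : y \in y |: (S :&: A) by rewrite !inE eqxx.
  by rewrite uy vy; apply: i1.
- by have /andP[] := key u v uy vS.
- by have /andP[] := key v u vy uS.
- exact: iS.
Qed.

Lemma vd_union e A B : vdecomp e A -> vdecomp e B -> disj A B -> sep e A B ->
  vdecomp e (A :|: B).
Proof.
move=> hA; elim: hA B => {A} [A iA | A x xA _ IH1 _ IH2 hs] B hB.
  elim: hB => {B} [B iB | B y yB _ IH1 _ IH2 hs] dAB sAB.
    apply: VD_edgeless => u v; rewrite !inE => /orP[uA|uB] /orP[vA|vB].
    - exact: iA.
    - by have /andP[] := sAB u v uA vB.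
    - by have /andP[] := sAB v u vA uB.
    - exact: iB.
  rewrite setUC; apply: (shed_union yB (disjC dAB) (sepC sAB)) => //.
  - rewrite setUC; apply: IH1; first exact: disjS (subxx _) (subsetDl _ _) dAB.
    exact: sepS (subxx _) (subsetDl _ _) sAB.
  - rewrite setUC; apply: IH2; first exact: disjS (subxx _) (subsetDl _ _) dAB.
    exact: sepS (subxx _) (subsetDl _ _) sAB.
move=> dAB sAB; apply: (shed_union xA dAB sAB) => //.
- apply: IH1 => //; first exact: disjS (subsetDl _ _) (subxx _) dAB.
  exact: sepS (subsetDl _ _) (subxx _) sAB.
- apply: IH2 => //; first exact: disjS (subsetDl _ _) (subxx _) dAB.
  exact: sepS (subsetDl _ _) (subxx _) sAB.
Qed.


Lemma simple_onS e W W' : W' \subset W -> simple_on e W -> simple_on e W'.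
Proof.
move=> /subsetP s [h1 h2]; split; first by move=> u v hu hv; apply: h1; apply: s.
by move=> u hu; apply: h2; apply: s.
Qed.

Lemma vd_link e W : vdecomp e W -> simple_on e W -> forall v, v \in W ->
  vdecomp e (W :\: cnbhd e W v).
Proof.
elim=> {W} [W iW | W x xW hN IH1 hD IH2 hs] sW v vW.
  apply: VD_edgeless; apply: indepS iW; exact: subsetDl.
have [sym loop] := sW.
have sN : simple_on e (W :\: cnbhd e W x) by apply: simple_onS sW; exact: subsetDl.
have sD : simple_on e (W :\ x) by apply: simple_onS sW; exact: subsetDl.
case: (v =P x) => [-> //| vx].
case exv: (e x v).
  have -> : W :\: cnbhd e W v = (W :\ x) :\: cnbhd e (W :\ x) v.
    apply/setP=> u; rewrite !mem_del !inE.
    case: (u =P x) => [->|ux] /=; last by [].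
    by rewrite sym // exv /= andbF.
  apply: IH2 => //; by rewrite !inE vW andbT; apply/eqP.
have vN : v \in W :\: cnbhd e W x by rewrite mem_del exv vW /= andbT; apply/eqP.
have vD : v \in W :\ x by rewrite !inE vW /= andbT; apply/eqP.
have xW' : x \in W :\: cnbhd e W v.
  by rewrite mem_del (sym v x vW xW) exv xW /= andbT eq_sym; apply/eqP.
apply: (VD_shed xW').
- have -> : (W :\: cnbhd e W v) :\: cnbhd e (W :\: cnbhd e W v) x =
           (W :\: cnbhd e W x) :\: cnbhd e (W :\: cnbhd e W x) v.
    apply/setP=> u; rewrite !mem_del.
    by case: (u != x); case: (u != v); case: (e x u); case: (e v u); case: (u \in W).
  exact: IH1.
- have -> : (W :\: cnbhd e W v) :\ x = (W :\ x) :\: cnbhd e (W :\ x) v.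
    apply/setP=> u; rewrite in_setD1 !mem_del in_setD1.
    by case: (u != x); case: (u != v); case: (e v u); case: (u \in W).
  exact: IH2.
move=> S sS iS.
have sS2 : v |: S \subset W :\: cnbhd e W x.
  apply/subsetP=> u; rewrite in_setU1 => /orP[/eqP->//|uS].
  by have := subsetP sS u uS; rewrite !mem_del => /and3P[-> -> /and3P[_ _ ->]].
have iS2 : indep e (v |: S).
  have hvS : forall u, u \in S -> ~~ e v u && ~~ e u v.
    move=> u uS; have := subsetP sS u uS; rewrite !mem_del => /and3P[_ _ /and3P[_ hvu uW]].
    by rewrite (sym u v uW vW) hvu.
  move=> a b; rewrite !inE => /orP[/eqP->|aS] /orP[/eqP->|bS].
  - exact: loop.
  - by have /andP[] := hvS b bS.
  - by have /andP[] := hvS a aS.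
  - exact: iS.
have [y yN [s1 i1]] := hs _ sS2 iS2.
move: yN; rewrite mem_nbhd => /and3P[yW yx exy].
have hv1 : v \in y |: (v |: S) by rewrite !inE eqxx orbT.
have hy1 : y \in y |: (v |: S) by rewrite !inE eqxx.
have yW' : y \in W :\: cnbhd e W v.
  rewrite mem_del yW andbT; apply/andP; split; last exact: i1 _ _ hv1 hy1.
  by apply/eqP=> yv; move: exy; rewrite yv exv.
exists y; first by rewrite mem_nbhd yW' yx exy.
split; last first.
  apply: indepS i1; apply/subsetP=> u; rewrite !inE => /orP[->//|->]; by rewrite !orbT.
apply/subsetP=> u; rewrite in_setU1 => /orP[/eqP->|uS].
  by rewrite in_setD1 yx yW'.
have := subsetP sS u uS; rewrite in_setD1 mem_del => /and3P[-> _ ->]; done.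
Qed.

Lemma vd_split e W : vdecomp e W -> forall A B, W = A :|: B -> disj A B -> sep e A B ->
  vdecomp e A.
Proof.
elim=> {W} [W iW | W x xW _ IH1 _ IH2 hs] A B defW dAB sAB.
  by apply: VD_edgeless; apply: indepS iW; rewrite defW subsetUl.
move: (xW); rewrite defW inE => /orP[xA|xB]; last first.
  apply: (IH2 A (B :\ x)); last first.
  - exact: sepS (subxx _) (subsetDl _ _) sAB.
  - exact: disjS (subxx _) (subsetDl _ _) dAB.
  rewrite defW setUC eq_D1U //; first by rewrite setUC.
  exact: disjC.
apply: (VD_shed xA).
- apply: (IH1 _ B) => //; first by rewrite defW eq_delU.
  - exact: disjS (subsetDl _ _) (subxx _) dAB.
  exact: sepS (subsetDl _ _) (subxx _) sAB.
- apply: (IH2 _ B) => //; first by rewrite defW eq_D1U.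
  - exact: disjS (subsetDl _ _) (subxx _) dAB.
  exact: sepS (subsetDl _ _) (subxx _) sAB.
move=> S sS iS.
have sS' : S \subset W :\: cnbhd e W x.
  rewrite defW eq_delU //; apply: subset_trans sS _; exact: subsetUl.
have [y yN [s1 i1]] := hs _ sS' iS.
move: yN; rewrite mem_nbhd => /and3P[yW yx exy].
have yA : y \in A.
  move: yW; rewrite defW inE => /orP[//|yB].
  by have /andP[] := sAB _ _ xA yB; rewrite exy.
exists y; first by rewrite mem_nbhd yA yx exy.
split=> //; apply/subsetP=> u; rewrite !inE => /orP[/eqP->|uS]; first by rewrite yx yA.
by have := subsetP sS u uS; rewrite mem_del => /and3P[-> _ ->].
Qed.

End Generic.

Section Main.
Variables (T : finType) (n : nat) (x : 'I_n -> T) (eG : rel T)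
  (Vi : 'I_n -> {set T}) (ei : 'I_n -> rel T).
Hypotheses (xinj : injective x) (sG : simple_on eG [set x i | i : 'I_n])
  (sI : forall i, simple_on (ei i) (Vi i)) (xV : forall i, x i \in Vi i)
  (card2 : forall i, 2 <= #|Vi i|) (conn : forall i, connected_on (ei i) (Vi i))
  (d1 : forall i j, i != j -> [disjoint Vi i :\ x i & Vi j :\ x j])
  (d2 : forall i, [disjoint Vi i :\ x i & [set x j | j : 'I_n]]).

Local Notation V := [set x i | i : 'I_n].
Local Notation eH := (attach_edge eG V Vi ei).
Local Notation VH := (attach_vertices V Vi).

Lemma xinV j : x j \in V.
Proof. by apply/imsetP; exists j. Qed.

Lemma F1 i u : u \in Vi i -> u \in V -> u = x i.
Proof.
move=> ui uV; apply/eqP; apply/negPn/negP => ux.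
have h : u \in Vi i :\ x i by rewrite in_setD1 ux ui.
by have := disjointFr (d2 i) h; rewrite uV.
Qed.

Lemma F6 j k : x j \in Vi k -> j = k.
Proof. move=> h; apply: xinj; exact: F1 h (xinV j). Qed.

Lemma F2 i j u : u \in Vi i -> u \in Vi j -> i = j.
Proof.
move=> ui uj; case: (i =P j) => // /eqP ij; exfalso.
case: (u =P x i) => [ex|nx].
  by move: uj; rewrite ex => /F6 e; move: ij; rewrite e eqxx.
case: (u =P x j) => [ex|nx'].
  by move: ui; rewrite ex => /F6 e; move: ij; rewrite e eqxx.
have h1 : u \in Vi i :\ x i by rewrite in_setD1 ui andbT; apply/eqP.
have h2 : u \in Vi j :\ x j by rewrite in_setD1 uj andbT; apply/eqP.
by have := disjointFr (d1 ij) h1; rewrite h2.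
Qed.

Lemma F3 i u v : u \in Vi i -> u \notin V -> eH u v = (v \in Vi i) && ei i u v.
Proof.
move=> ui uV; rewrite /attach_edge /= (negbTE uV) /=.
apply/existsP/andP => [[k /and3P[uk vk ek]]|[vi e]].
  by have := F2 ui uk => ik; subst k.
by exists i; rewrite ui vi e.
Qed.

Lemma F3' i u v : v \in Vi i -> v \notin V -> eH u v = (u \in Vi i) && ei i u v.
Proof.
move=> vi vV; rewrite /attach_edge /= (negbTE vV) andbF /=.
apply/existsP/andP => [[k /and3P[uk vk ek]]|[ui e]].
  by have := F2 vi vk => ik; subst k.
by exists i; rewrite ui vi e.
Qed.

Lemma F4 i : agree eH (ei i) (Vi i).
Proof.
move=> u v ui vi.
case uV: (u \in V); last by rewrite (F3 _ ui) ?uV // vi.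
case vV: (v \in V); last by rewrite (@F3' i u v vi) ?vV // ui.
have eu := F1 ui uV; have ev := F1 vi vV; subst u v.
rewrite (negbTE ((sI i).2 _ (xV i))) /attach_edge /= (negbTE (sG.2 _ (xinV i))) !andbF /=.
apply/existsP => [[k /and3P[h _ e]]]; have := F6 h => ik; subst k.
by move: e; rewrite (negbTE ((sI i).2 _ (xV i))).
Qed.

Lemma F4' i : agree (ei i) eH (Vi i).
Proof. by move=> u v ui vi; rewrite (F4 ui vi). Qed.

Lemma F5 : simple_on eH VH.
Proof.
split.
  move=> u v _ _; rewrite /attach_edge /=; congr orb.
    case uV: (u \in V); case vV: (v \in V) => //=; exact: sG.1.
  apply: eq_existsb => k; case uk: (u \in Vi k); case vk: (v \in Vi k) => //=.
  exact: (sI k).1.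
move=> u _; rewrite /attach_edge /= negb_or; apply/andP; split.
  case uV: (u \in V) => //=; exact: sG.2.
apply/existsP => [[k /and3P[uk _ e]]]; move: e; by rewrite (negbTE ((sI k).2 u uk)).
Qed.

Lemma tt_sub j u (Tj : {set T}) : Tj \subset Vi j :\ x j -> u \in Tj ->
  u \in Vi j /\ u \notin V.
Proof.
move=> /subsetP s /s; rewrite in_setD1 => /andP[ux uj]; split=> //.
apply/negP => uV; by move: ux; rewrite (F1 uj uV) eqxx.
Qed.

Lemma union_part (Tt : 'I_n -> {set T}) : (forall j, Tt j \subset Vi j :\ x j) ->
  (forall j, vdecomp eH (Tt j)) -> vdecomp eH [set u | [exists j, u \in Tt j]].
Proof.
move=> hsub hvd.
suff H : forall s, uniq s -> vdecomp eH [set u | has (fun j => u \in Tt j) s].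
  have -> : [set u | [exists j, u \in Tt j]] = [set u | has (fun j => u \in Tt j) (enum 'I_n)].
    apply/setP=> u; rewrite !inE; apply/existsP/hasP => [[j h]|[j _ h]].
      by exists j; rewrite ?mem_enum.
    by exists j.
  exact: H (enum_uniq _).
elim=> [_|j s IH /andP[js us]].
  have -> : [set u | has (fun j => u \in Tt j) [::]] = set0 by apply/setP => u; rewrite !inE.
  by apply: VD_edgeless => u v; rewrite inE.
have -> : [set u | has (fun j0 => u \in Tt j0) (j :: s)] =
          Tt j :|: [set u | has (fun k => u \in Tt k) s].
  by apply/setP=> u; rewrite !inE.
apply: vd_union => //; first exact: IH.
  move=> u uj; rewrite inE => /hasP[k ks uk].
  have [uVj _] := tt_sub (hsub j) uj; have [uVk _] := tt_sub (hsub k) uk.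
  by move: js; rewrite (F2 uVj uVk) ks.
move=> u v uj; rewrite inE => /hasP[k ks vk].
have [uVj unV] := tt_sub (hsub j) uj; have [vVk vnV] := tt_sub (hsub k) vk.
rewrite (F3 _ uVj unV) (F3 _ vVk vnV).
case vj: (v \in Vi j); first by move: js; rewrite (F2 vj vVk) ks.
case uk: (u \in Vi k) => //; by move: js; rewrite (F2 uVj uk) ks.
Qed.

Definition Wf (I : {set 'I_n}) (Tt : 'I_n -> {set T}) :=
  [set u | (u \in x @: I) || [exists j, u \in Tt j]].

Lemma mem_Wf I Tt u : (u \in Wf I Tt) = (u \in x @: I) || [exists j, u \in Tt j].
Proof. by rewrite inE. Qed.



Lemma core (hsh : forall i, shedding_vertex (ei i) (Vi i) (x i)) :
  forall k (I : {set 'I_n}) (Tt : 'I_n -> {set T}), #|I| <= k ->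
  (forall j, Tt j \subset Vi j :\ x j) -> (forall j, vdecomp eH (Tt j)) ->
  (forall j, j \in I -> Tt j = Vi j :\ x j) -> vdecomp eH (Wf I Tt).
Proof.
have base : forall Tt : 'I_n -> {set T}, (forall j, Tt j \subset Vi j :\ x j) -> (forall j, vdecomp eH (Tt j)) ->
    vdecomp eH (Wf set0 Tt).
  move=> Tt hsub hvd.
  have -> : Wf set0 Tt = [set u | [exists j, u \in Tt j]].
    by apply/setP=> u; rewrite mem_Wf imset0 !inE.
  exact: union_part.
elim=> [|k IH] I Tt hk hsub hvd hI.
  by move: hk; rewrite leqn0 => /eqP /cards0_eq ->; apply: base.
case: (set_0Vmem I) => [->|[i iI]]; first exact: base.
have [_ hN hD hsc] := hsh i.
have ag := @F4 i.
have Ti : Tt i = Vi i :\ x i := hI i iI.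
apply: (VD_shed (x := x i)); first by rewrite mem_Wf imset_f.
- pose T1 := fun j => if j == i then Vi i :\: cnbhd (ei i) (Vi i) (x i) else Tt j.
  pose I1 := [set j in I | (j != i) && ~~ eG (x i) (x j)].
  have -> : Wf I Tt :\: cnbhd eH (Wf I Tt) (x i) = Wf I1 T1.
    apply/setP => u; rewrite mem_del !mem_Wf; apply/idP/idP.
      move=> /and3P[uxi nexu /orP[/imsetP[j jI eu] | /existsP[j uj]]].
        subst u; apply/orP; left; apply: imset_f; rewrite inE jI /=.
        apply/andP; split; first by apply/eqP => ji; move: uxi; rewrite ji eqxx.
        apply/negP => eij; move: nexu; rewrite /attach_edge /= !xinV eij.
        done.
      apply/orP; right; apply/existsP; exists j; rewrite /T1.
      case: (j =P i) => [ji|_] //; subst j.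
      move: uj; rewrite Ti in_setD1 => /andP[_ uVi].
      by rewrite mem_del uxi uVi -(ag _ _ (xV i) uVi) nexu.
    move=> /orP[/imsetP[j] | /existsP[j]].
      rewrite inE => /and3P[jI ji nej] ->.
      rewrite (inj_eq xinj) ji /= imset_f // andbT.
      rewrite /attach_edge /= negb_or (negbTE nej) !andbF /=.
      apply/existsP => [[k0 /and3P[ik jk _]]].
      by move: ji; rewrite (F6 ik) (F6 jk) eqxx.
    rewrite /T1; case: (j =P i) => [_ | /eqP ji] uj.
      move: uj; rewrite mem_del => /and3P[uxi neu uVi].
      rewrite uxi (ag _ _ (xV i) uVi) neu /=; apply/orP; right; apply/existsP; exists i.
      by rewrite Ti in_setD1 uxi uVi.
    have [uVj unV] := tt_sub (hsub j) uj.
    apply/and3P; split.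
    - by apply/eqP => e; move: unV; rewrite e xinV.
    - rewrite (@F3' j (x i) u uVj unV); apply/negP => /andP[h _].
      by move: ji; rewrite (F6 h) eqxx.
    - by apply/orP; right; apply/existsP; exists j.
  apply: (IH I1 T1).
  - have : #|I1| <= #|I :\ i|.
      apply: subset_leq_card; apply/subsetP => j; rewrite !inE => /and3P[-> -> _].
      done.
    move: hk; rewrite (cardsD1 i I) iI add1n ltnS => h1 h2; exact: leq_trans h2 h1.
  - move=> j; rewrite /T1; case: (j =P i) => [->|_]; last exact: hsub.
    apply/subsetP => u; rewrite mem_del in_setD1 => /and3P[-> _ ->]; done.
  - move=> j; rewrite /T1; case: ifP => [_|_]; last exact: hvd.
    exact: (vd_ext hN (agreeS (subsetDl _ _) (@F4' i))).
  - move=> j; rewrite inE => /and3P[jI ji _]; rewrite /T1 (negbTE ji); exact: hI.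
- have -> : Wf I Tt :\ x i = Wf (I :\ i) Tt.
    apply/setP => u; rewrite in_setD1 !mem_Wf; apply/idP/idP.
      move=> /andP[uxi /orP[/imsetP[j jI ejx]|h]]; last by rewrite h orbT.
      subst u;
      apply/orP; left; apply: imset_f; rewrite in_setD1 jI andbT.
      by apply/eqP => ji; move: uxi; rewrite ji eqxx.
    move=> /orP[/imsetP[j] | /existsP[j uj]].
      rewrite in_setD1 => /andP[ji jI] ->.
      by rewrite (inj_eq xinj) ji imset_f.
    have [_ unV] := tt_sub (hsub j) uj.
    apply/andP; split; first by apply/eqP => e; move: unV; rewrite e xinV.
    by apply/orP; right; apply/existsP; exists j.
  apply: IH => //.
  move: hk; rewrite (cardsD1 i I) iI add1n ltnS; done.
  by move=> j; rewrite in_setD1 => /andP[_]; exact: hI.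
move=> S sS iS.
have sS' : S :&: Vi i \subset Vi i :\: cnbhd (ei i) (Vi i) (x i).
  apply/subsetP => u; rewrite inE => /andP[uS uVi].
  have := subsetP sS u uS; rewrite mem_del => /and3P[uxi nexu _].
  by rewrite mem_del uxi uVi -(ag _ _ (xV i) uVi) nexu.
have iS' : indep (ei i) (S :&: Vi i).
  apply: (indep_agree ag); first exact: subsetIr.
  apply: indepS iS; exact: subsetIl.
have [y yN [s1 i1]] := hsc _ sS' iS'.
move: yN; rewrite mem_nbhd => /and3P[yVi yxi ey].
have yW : y \in Wf I Tt.
  by rewrite mem_Wf; apply/orP; right; apply/existsP; exists i; rewrite Ti in_setD1 yxi yVi.
have ynV : y \notin V by apply/negP => yV; move: yxi; rewrite (F1 yVi yV) eqxx.
exists y; first by rewrite mem_nbhd yW yxi (ag _ _ (xV i) yVi).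
split.
  apply/subsetP => u; rewrite in_setU1 => /orP[/eqP->|uS]; first by rewrite in_setD1 yxi yW.
  have := subsetP sS u uS; rewrite mem_del in_setD1 => /and3P[-> _ ->]; done.
have hy1 : y \in y |: (S :&: Vi i) by rewrite in_setU1 eqxx.
have key : forall v, v \in S -> ~~ eH y v && ~~ eH v y.
  move=> v vS; case vVi: (v \in Vi i).
    have hv : v \in y |: (S :&: Vi i) by rewrite in_setU1 inE vS vVi orbT.
    by rewrite (ag _ _ yVi vVi) (ag _ _ vVi yVi) (i1 _ _ hy1 hv) (i1 _ _ hv hy1).
  by rewrite (F3 _ yVi ynV) (@F3' i v y yVi ynV) vVi.
move=> a b; rewrite !in_setU1 => /orP[/eqP->|aS] /orP[/eqP->|bS].
- by rewrite (ag _ _ yVi yVi); apply: i1.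
- by have /andP[] := key b bS.
- by have /andP[] := key a aS.
- exact: iS.
Qed.

Lemma main_i : (forall i, vdecomp (ei i) (Vi i) /\ shedding_vertex (ei i) (Vi i) (x i)) ->
  vdecomp eH VH.
Proof.
move=> h; have hsh : forall i, shedding_vertex (ei i) (Vi i) (x i) by move=> i; case: (h i).
have := @core hsh #|[set: 'I_n]| setT (fun j => Vi j :\ x j) (leqnn _).
have -> : Wf setT (fun j => Vi j :\ x j) = VH.
  apply/setP => u; rewrite mem_Wf /attach_vertices in_setU; apply/idP/idP.
    move=> /orP[/imsetP[j _ ->]|/existsP[j]]; first by rewrite xinV.
    rewrite in_setD1 => /andP[_ uj]; apply/orP; right; apply/bigcupP; by exists j.
  move=> /orP[/imsetP[j _ ->]|/bigcupP[j _ uj]]; first by rewrite imset_f.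
  case: (u =P x j) => [->|/eqP ux]; first by rewrite imset_f.
  by apply/orP; right; apply/existsP; exists j; rewrite in_setD1 ux uj.
apply => // j.
have [_ _ hD _] := hsh j.
exact: (vd_ext hD (agreeS (subsetDl _ _) (@F4' j))).
Qed.


Definition yv j := odflt (x j) [pick z in Vi j | (z != x j) && ei j (x j) z].

Lemma yP j : [/\ yv j \in Vi j, yv j != x j & ei j (x j) (yv j)].
Proof.
rewrite /yv; case: pickP => [z /andP[zV /andP[zx ez]] | none] /=; first by [].
exfalso.
have : 0 < #|Vi j :\ x j|.
  by have := card2 j; rewrite (cardsD1 (x j)) xV add1n ltnS.
rewrite card_gt0 => /set0Pn[z]; rewrite in_setD1 => /andP[zx zV].
have [_ cj] := conn j.
have /connectP[p pth zl] := cj (x j) z (xV j) zV.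
case: p pth zl => [_ /= zx'| w p /= /andP[ew _] _].
  by move: zx; rewrite zx' eqxx.
move: ew; rewrite /induced /= => /and3P[_ wV e'].
have wx : w != x j.
  by apply/eqP => wx; move: e'; rewrite wx (negbTE ((sI j).2 _ (xV j))).
by have := none w; rewrite /= wV wx e'.
Qed.

Lemma ynV j : yv j \notin V.
Proof.
have [h1 h2 _] := yP j; apply/negP => h; by move: h2; rewrite (F1 h1 h) eqxx.
Qed.

Definition Ws s := [set u in VH | all (fun j => (u != yv j) && ~~ eH (yv j) u) s].

Lemma ii_iter : vdecomp eH VH -> forall s, uniq s -> vdecomp eH (Ws s).
Proof.
move=> hVD; elim=> [_|j s IH /andP[js us]].
  have -> : Ws [::] = VH by apply/setP => u; rewrite inE andbT.
  done.
have -> : Ws (j :: s) = Ws s :\: cnbhd eH (Ws s) (yv j).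
  apply/setP => u; rewrite mem_del !in_set [all _ _]/=.
  set a := (u \in V) || _; set b := all _ s.
  by case: a; case: b; case: (u != yv j); case: (eH (yv j) u).
have [yVj _ _] := yP j.
apply: vd_link; first exact: IH.
  apply: simple_onS F5; apply/subsetP => u; rewrite inE => /andP[-> _]; done.
rewrite inE; apply/andP; split.
  by rewrite /attach_vertices in_setU; apply/orP; right; apply/bigcupP; exists j.
apply/allP => k ks; have [yVk _ _] := yP k.
have jk : j != k by apply/eqP => e; move: js; rewrite e ks.
apply/andP; split.
  apply/eqP => e; move: jk; rewrite -e in yVk; by rewrite (F2 yVj yVk) eqxx.
rewrite (F3 _ yVk (ynV k)); apply/negP => /andP[h _].
by move: jk; rewrite (F2 yVj h) eqxx.
Qed.

Lemma main_ii : vdecomp eH VH -> forall i, vdecomp (ei i) (Vi i).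
Proof.
move=> hVD i.
pose s := [seq j <- enum 'I_n | j != i].
have us : uniq s by rewrite filter_uniq // enum_uniq.
have hW := ii_iter hVD us.
have memS : forall j, (j \in s) = (j != i) by move=> j; rewrite mem_filter mem_enum andbT.
have sub : Vi i \subset Ws s.
  apply/subsetP => u ui; rewrite inE; apply/andP; split.
    by rewrite /attach_vertices in_setU; apply/orP; right; apply/bigcupP; exists i.
  apply/allP => k; rewrite memS => ki; have [yVk _ _] := yP k.
  apply/andP; split.
    by apply/eqP => e; move: ki; rewrite -e in yVk; rewrite (F2 ui yVk) eqxx.
  rewrite (F3 _ yVk (ynV k)); apply/negP => /andP[h _].
  by move: ki; rewrite (F2 ui h) eqxx.
have eqW : Ws s = Vi i :|: (Ws s :\: Vi i).
  apply/setP => u; rewrite in_setU in_setD.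
  case uVi: (u \in Vi i) => /=; last by [].
  by rewrite (subsetP sub u uVi).
apply: (vd_ext (e := eH)); last exact: @F4 i.
apply: (vd_split hW eqW).
  by move=> u h1; rewrite in_setD h1.
move=> u v ui; rewrite in_setD => /andP[vi]; rewrite inE => /andP[vVH hall].
case vV: (v \in V).
  move: vV => /imsetP[j _ ev]; subst v.
  have ji : j != i by apply/eqP => e; move: vi; rewrite e xV.
  have [yVj _ ej] := yP j.
  have := allP hall j; rewrite memS => /(_ ji) /andP[_].
  rewrite (F3 _ yVj (ynV j)) (xV j) /= ((sI j).1 _ _ yVj (xV j)) ej.
  done.
move: vVH; rewrite /attach_vertices in_setU vV /= => /bigcupP[j _ vj].
have ji : j != i by apply/eqP => e; move: vi; rewrite -e vj.
rewrite (@F3' j u v vj (negbT vV)) (F3 _ vj (negbT vV)).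
case uj: (u \in Vi j) => //=.
by move: ji; rewrite (F2 ui uj) eqxx.
Qed.

End Main.

Theorem proposition2p3 (T : finType) (n : nat) (x : 'I_n -> T)
    (eG : rel T) (Vi : 'I_n -> {set T}) (ei : 'I_n -> rel T) :
  injective x ->
  simple_on eG [set x i | i : 'I_n] ->
  (forall i, simple_on (ei i) (Vi i)) ->
  (forall i, x i \in Vi i) ->
  (forall i, 2 <= #|Vi i|) ->
  (forall i, connected_on (ei i) (Vi i)) ->
  (forall i j, i != j -> [disjoint Vi i :\ x i & Vi j :\ x j]) ->
  (forall i, [disjoint Vi i :\ x i & [set x j | j : 'I_n]]) ->
  let V := [set x i | i : 'I_n] in
  let eH := attach_edge eG V Vi ei in
  let VH := attach_vertices V Vi in
  ((forall i, vdecomp (ei i) (Vi i) /\ shedding_vertex (ei i) (Vi i) (x i)) ->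
     vdecomp eH VH) /\
  (vdecomp eH VH -> forall i, vdecomp (ei i) (Vi i)).
Proof.
move=> xinj sG sI xV card2 conn d1 d2; cbv zeta; split.
  exact: main_i.
exact: main_ii.
Qed.
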